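(* Let $D\ge2$. There exists a constant $C>0$ depending only on $D$ such that: if $0<\eta<1$ and $E\subset\mathbb R^D$ is finite with $\mathrm{diam}(E)=1$ and $V_D(E)\leq\eta^D$, then there exists an improper Euclidean motion $\rho$ with $|\rho(z)-z|\leq C\eta$ for all $z\in E$.
   Context: A Euclidean motion is $x\mapsto Tx+x_0$ with $T\in O(D)$; improper if $\det T=-1$. For finite $E$, $V_D(E)$ is the maximum over $z_0,\dots,z_D\in E$ of the $D$-dimensional volume of the simplex with vertices $z_0,\dots,z_D$. *)

(* Defs.v *)
From HB Require Import structures.
From mathcomp Require Import all_boot all_order all_algebra.
From mathcomp Require Import Rstruct.
Set Implicit Arguments. Unset Strict Implicit. Unset Printing Implicit Defensive.
Import Order.TTheory GRing.Theory Num.Theory.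
Local Open Scope ring_scope.

Definition eucl_norm (D : nat) (v : 'rV[Rdefinitions.R]_D) : Rdefinitions.R :=
  Num.sqrt (\sum_(i < D) (v 0 i) ^+ 2).

Definition diam (D : nat) (E : seq 'rV[Rdefinitions.R]_D) : Rdefinitions.R :=
  \big[Num.max/0]_(x <- E) \big[Num.max/0]_(y <- E) eucl_norm (x - y).

Definition simplex_vol (D : nat) (z : 'I_D.+1 -> 'rV[Rdefinitions.R]_D) : Rdefinitions.R :=
  `|\det (\matrix_(i < D, j < D) (z (lift ord0 i) 0 j - z ord0 0 j))|
    / (factorial D)%:R.

Definition VD (D : nat) (E : seq 'rV[Rdefinitions.R]_D) : Rdefinitions.R :=
  \big[Num.max/0]_(f : {ffun 'I_D.+1 -> 'I_(size E)})
     simplex_vol (fun i => nth 0 E (f i)).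

Definition improper_motion (D : nat) (rho : 'rV[Rdefinitions.R]_D -> 'rV[Rdefinitions.R]_D) : Prop :=
  exists (T : 'M[Rdefinitions.R]_D) (x0 : 'rV[Rdefinitions.R]_D),
    T *m T^T = 1%:M /\ \det T = -1 /\ forall x, rho x = x *m T + x0.

(* Main.v *)
Require Import Defs.
From HB Require Import structures.
From mathcomp Require Import all_boot all_order all_algebra.
From mathcomp Require Import Rstruct ring lra.
Import Order.TTheory GRing.Theory Num.Theory.
Local Open Scope ring_scope.
Notation R := Rdefinitions.R.

Lemma det_rank1 (D : nat) (u v : 'rV[R]_D) :
  \det (1%:M + u^T *m v) = 1 + (v *m u^T) 0 0.
Proof.
set P := block_mx (1%:M : 'M_D) (- u^T) v (1%:M : 'M_1).
have h1 : block_mx (1%:M : 'M_D) 0 (- v) (1%:M : 'M_1) *m P =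
          block_mx 1%:M (- u^T) 0 (1%:M + v *m u^T).
  rewrite /P mulmx_block !mul1mx !mul0mx !addr0 !mulNmx !mulmx1 mulmxN opprK.
  by rewrite addNr addrC.
have h2 : block_mx (1%:M : 'M_D) u^T 0 (1%:M : 'M_1) *m P =
          block_mx (1%:M + u^T *m v) 0 v 1%:M.
  rewrite /P mulmx_block !mul1mx !mul0mx !add0r mulmx1 addNr.
  by [].
have e1 := congr1 determinant h1; have e2 := congr1 determinant h2.
rewrite !det_mulmx !det_lblock !det_ublock !det1 !mul1r ?mulr1 in e1 e2.
rewrite -e2 e1 det_mx11 !mxE eqxx /=.
by [].
Qed.

Lemma nnT (D : nat) (n : 'rV[R]_D) : n *m n^T = ((n *m n^T) 0 0)%:M.
Proof. by apply/matrixP=> i j; rewrite !ord1 [in RHS]mxE eqxx mulr1n. Qed.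

Lemma zz (V : zmodType) (o x : V) : o - x - (x - (x + x)) = o.
Proof. have -> : x - (x + x) = - x by rewrite opprD addrA subrr add0r.
by rewrite opprK subrK. Qed.

Lemma refl_props (D : nat) (n : 'rV[R]_D) (S : R) :
  S = (n *m n^T) 0 0 -> S != 0 ->
  let T := 1%:M - (2 / S) *: (n^T *m n) in
  T *m T^T = 1%:M /\ \det T = -1.
Proof.
move=> eS S0 T.
have TT : T^T = T.
  by rewrite /T linearB /= tr_scalar_mx linearZ /= trmx_mul trmxK.
split.
  rewrite TT /T mulmxBl mul1mx mulmxBr mulmx1 -scalemxAl -scalemxAr.
  rewrite -!mulmxA (mulmxA n) nnT -eS mul_scalar_mx -scalemxAr !scalerA.
  have -> : (2 / S * (2 / S * S)) *: (n^T *m n) = ((2 / S) *: (n^T *m n)) + ((2/S) *: (n^T *m n)).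
    rewrite -scalerDl; congr (_ *: _).
    by rewrite -mulrA divfK //; ring.
  by rewrite zz.
rewrite /T -scaleNr scalemxAr det_rank1 -scalemxAl mxE -eS.
rewrite mulNr divfK //; ring.
Qed.

Definition rowc (D : nat) (E : seq 'rV[R]_D) (x0 : 'rV[R]_D)
  (c : {ffun 'I_D -> 'I_(size E) + 'I_D}) (i j : 'I_D) : R :=
  match c i with inl p => (nth 0 E p - x0) 0 j | inr k => (k == j)%:R end.

Definition Mc D E x0 c : 'M[R]_D := \matrix_(i, j) rowc D E x0 c i j.

Definition mc D (E : seq 'rV[R]_D) (c : {ffun 'I_D -> 'I_(size E) + 'I_D}) : nat :=
  (\sum_i (if c i is inr _ then 1 else 0))%N.

Definition wc D E x0 (s : R) c : R := `|\det (Mc D E x0 c)| * s ^+ (mc D E c).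

Lemma w_id D E x0 s :
  wc D E x0 s [ffun i => inr i] = s ^+ D.
Proof.
rewrite /wc.
have -> : Mc D E x0 [ffun i => inr i] = 1%:M.
  by apply/matrixP=> i j; rewrite !mxE /rowc ffunE.
rewrite det1 normr1 mul1r /mc.
congr (_ ^+ _).
rewrite (eq_bigr (fun _ => 1%N)); last by move=> i _; rewrite ffunE.
by rewrite sum1_card card_ord.
Qed.

Lemma cofactor_rowind (n : nat) (A B : 'M[R]_n) (i j : 'I_n) :
  (forall k l, k != i -> A k l = B k l) -> cofactor A i j = cofactor B i j.
Proof.
move=> h; rewrite /cofactor; congr (_ * _); congr (\det _).
by apply/matrixP=> k l; rewrite !mxE h // eq_sym neq_lift.
Qed.

Lemma mc_repl D (E : seq 'rV[R]_D) (c : {ffun 'I_D -> 'I_(size E) + 'I_D}) (i0 : 'I_D) (j0 : 'I_D) (q : 'I_(size E)) :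
  c i0 = inr j0 ->
  mc D E c = (mc D E [ffun i => if i == i0 then inl q else c i]).+1.
Proof.
move=> h; rewrite /mc (bigD1 i0) //= [in RHS](bigD1 i0) //= h ffunE eqxx add0n add1n.
congr (_.+1); apply: eq_bigr => i /negbTE hi; by rewrite ffunE hi.
Qed.

Lemma all_inl_bound D (E : seq 'rV[R]_D) (c : {ffun 'I_D -> 'I_(size E) + 'I_D}) (hN : (0 < size E)%N) :
  (forall i, exists p, c i = inl p) ->
  `|\det (Mc D E (nth 0 E 0) c)| <= (factorial D)%:R * VD E.
Proof.
move=> h.
pose pi i := match c i with inl p => p | inr _ => Ordinal hN end.
pose f : {ffun 'I_D.+1 -> 'I_(size E)} :=
  [ffun k => if unlift ord0 k is Some i then pi i else Ordinal hN].
have e : Mc D E (nth 0 E 0) c =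
   \matrix_(i < D, j < D) ((fun k => nth 0 E (f k)) (lift ord0 i) 0 j
       - (fun k => nth 0 E (f k)) ord0 0 j).
  apply/matrixP=> i j; rewrite !mxE /rowc !ffunE liftK unlift_none /pi.
  by case: (h i) => p ->; rewrite !mxE.
have hf : (0 < (factorial D)%:R :> R) by rewrite ltr0n fact_gt0.
rewrite e -ler_pdivrMl // mulrC.
rewrite /VD; exact: (le_bigmax 0 (fun f : {ffun 'I_D.+1 -> 'I_(size E)} => simplex_vol (fun i => nth 0 E (f i))) f).
Qed.

Lemma rowT11 D (u v : 'rV[R]_D) : u *m v^T = ((u *m v^T) 0 0)%:M.
Proof. by apply/matrixP=> i j; rewrite !ord1 [in RHS]mxE eqxx mulr1n. Qed.

Lemma norm_scale D (k : R) (n : 'rV[R]_D) :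
  eucl_norm (k *: n) = `|k| * Num.sqrt ((n *m n^T) 0 0).
Proof.
rewrite /eucl_norm [in RHS]mxE.
have -> : \sum_i (k *: n) 0 i ^+ 2 = k ^+ 2 * \sum_i n 0 i * n^T i 0.
  rewrite mulr_sumr; apply eq_bigr => i _; rewrite !mxE; ring.
rewrite sqrtrM ?sqr_ge0 // sqrtr_sqr //.
Qed.

Lemma zz2 (V : zmodType) (z X Y : V) : z - X + Y - z = Y - X.
Proof. by rewrite addrAC (addrAC z) subrr add0r addrC. Qed.

Lemma fact_lt_pow (D : nat) : (2 <= D)%N ->
  (factorial D)%:R < (2 * (factorial D)%:R) ^+ D :> R.
Proof.
case: D => [|D'] // _.
rewrite exprS.
have h1 : 1 <= 2 * (factorial D'.+1)%:R :> R.
  by rewrite -natrM ler1n muln_gt0 fact_gt0.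
have h2 : 1 <= (2 * (factorial D'.+1)%:R) ^+ D' :> R by rewrite exprn_ege1.
have h3 : 1 <= (factorial D'.+1)%:R :> R by rewrite ler1n fact_gt0.
nra.
Qed.

Theorem lemma3p6 (D : nat) (hD : (2 <= D)%N) :
  exists C : Rdefinitions.R, 0 < C /\
    forall (eta : Rdefinitions.R) (E : seq 'rV[Rdefinitions.R]_D),
      0 < eta -> eta < 1 ->
      diam E = 1 -> VD E <= eta ^+ D ->
      exists rho : 'rV[Rdefinitions.R]_D -> 'rV[Rdefinitions.R]_D,
        improper_motion rho /\
        forall z, z \in E -> eucl_norm (rho z - z) <= C * eta.
Proof.
have hf : (0 < (factorial D)%:R :> R) by rewrite ltr0n fact_gt0.
exists (4 * (factorial D)%:R); split; first by rewrite mulr_gt0.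
move=> eta E he _ hdiam hV.
have hN : (0 < size E)%N.
  case: E hdiam {hV} => [|] //=; rewrite /diam big_nil => /eqP.
  by rewrite eq_sym oner_eq0.
set x0 := nth 0 E 0.
set s := 2 * (factorial D)%:R * eta.
have spos : 0 < s by rewrite !mulr_gt0.
pose w := wc D E x0 s.
pose cid : {ffun 'I_D -> 'I_(size E) + 'I_D} := [ffun i => inr i].
case: (@arg_maxP _ _ _ cid predT w isT) => c _ cmax.
have wc_ge : s ^+ D <= w c by rewrite -(w_id D E x0 s); apply: cmax.
have sD : (factorial D)%:R * eta ^+ D < s ^+ D.
  rewrite /s exprMn ltr_pM2r ?exprn_gt0 //.
  exact: fact_lt_pow.
have [i0 [j0 hj0]] : exists i0, exists j0, c i0 = inr j0.
  case: (pickP (fun i => if c i is inr _ then true else false)) => [i0|].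
    by case e: (c i0) => [p|j0] //= _; exists i0, j0.
  move=> hall.
  have hinl : forall i, exists p, c i = inl p.
    by move=> i; move: (hall i); case: (c i) => [p|j] //= _; exists p.
  have m0 : mc D E c = 0%N.
    by rewrite /mc big1 // => i _; case: (hinl i) => p ->.
  have := all_inl_bound D E c hN hinl.
  move: wc_ge; rewrite /w /wc m0 expr0 mulr1 => h1 h2.
  have : (factorial D)%:R * VD E <= (factorial D)%:R * eta ^+ D by rewrite ler_pM2l.
  move=> h3.
  have := le_lt_trans (le_trans h1 (le_trans h2 h3)) sD.
  by rewrite ltxx.
set Delta := \det (Mc D E x0 c).
have D0 : Delta != 0.
  apply/eqP => e0; move: wc_ge; rewrite /w /wc -/Delta e0 normr0 mul0r.
  by rewrite leNgt exprn_gt0.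
pose n : 'rV[R]_D := \row_j (cofactor (Mc D E x0 c) i0 j / Delta).
have hDelta : Delta = cofactor (Mc D E x0 c) i0 j0.
  rewrite /Delta (expand_det_row _ i0) (bigD1 j0) //= big1 ?addr0.
    by rewrite mxE /rowc hj0 eqxx mul1r.
  by move=> j hj; rewrite mxE /rowc hj0 eq_sym (negbTE hj) mul0r.
have nj0 : n 0 j0 = 1 by rewrite mxE -hDelta divff.
have key : forall z, z \in E -> `|((z - x0) *m n^T) 0 0| <= s.
  move=> z zE.
  have hq : (index z E < size E)%N by rewrite index_mem.
  pose q := Ordinal hq.
  pose c' : {ffun 'I_D -> 'I_(size E) + 'I_D} :=
     [ffun i => if i == i0 then inl q else c i].
  have hm := mc_repl D E c i0 j0 q hj0.
  have hw : w c' <= w c := cmax c' isT.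
  have hdet : \det (Mc D E x0 c') = Delta * ((z - x0) *m n^T) 0 0.
    rewrite (expand_det_row _ i0) [in RHS]mxE mulr_sumr; apply eq_bigr => j _.
    rewrite (@cofactor_rowind _ _ (Mc D E x0 c)); last first.
      by move=> k l hk; rewrite !mxE /rowc ffunE (negbTE hk).
    rewrite !mxE /rowc ffunE eqxx /= nth_index //.
    by rewrite mxE [RHS]mulrCA [X in _ = _ * X]mulrCA divff // mulr1 mxE.
  move: hw; rewrite /w /wc hdet hm normrM exprS => hw.
  have apos : 0 < `|Delta| * s ^+ mc D E c'.
    by rewrite mulr_gt0 ?normr_gt0 ?exprn_gt0.
  rewrite -(ler_pM2l apos).
  move: hw; rewrite mulrAC.
  by rewrite [s * _]mulrC mulrA.
set S := (n *m n^T) 0 0.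
have S1 : 1 <= S.
  rewrite /S mxE (bigD1 j0) //= [n^T j0 0]mxE nj0 mul1r lerDl.
  by apply: sumr_ge0 => j _; rewrite [n^T j 0]mxE -expr2 sqr_ge0.
have S0 : S != 0 by apply/eqP => e; move: S1; rewrite e ler10.
pose T := 1%:M - (2 / S) *: (n^T *m n).
pose b := ((2 / S) * (x0 *m n^T) 0 0) *: n.
exists (fun x => x *m T + b); split.
  exists T, b; have [h1 h2] := @refl_props D n S erefl S0.
  by split; [exact: h1 | split; [exact: h2 | by []]].
move=> z zE.
have -> : z *m T + b - z = ((2 / S) * ((x0 - z) *m n^T) 0 0) *: n.
  rewrite /T /b mulmxBr mulmx1 -scalemxAr mulmxA (rowT11 D z n) mul_scalar_mx.
  rewrite mulmxBl [in RHS]mxE scalerA [X in _ = (_ * (_ + X)) *: _]mxE mulrDr mulrN scalerDl scaleNr.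
  by rewrite zz2 addrC.
rewrite norm_scale -/S.
have hk := key z zE.
have e1 : ((x0 - z) *m n^T) 0 0 = - ((z - x0) *m n^T) 0 0.
  by rewrite -opprB mulNmx mxE.
rewrite e1 normrM normrN.
set d := `|((z - x0) *m n^T) 0 0| in hk *.
have Spos : 0 < S by apply: lt_le_trans S1.
have hr := sqrtr_ge0 S.
have hrS : Num.sqrt S ^+ 2 = S by rewrite sqr_sqrtr // ltW.
have rS : Num.sqrt S <= S.
  rewrite -[X in _ <= X]hrS; nra.
rewrite ger0_norm; last by rewrite divr_ge0 ?ler0n // ltW.
have : 2 / S * d * Num.sqrt S <= 2 * d.
  have -> : 2 / S * d * Num.sqrt S = 2 * d * (Num.sqrt S / S).
    by rewrite mulrAC -!mulrA; congr (_ * _); ring.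
  apply: ler_piMr; first by rewrite mulr_ge0 ?normr_ge0.
  by rewrite ler_pdivrMr // mul1r.
move=> h; apply: le_trans h _.
rewrite /s in hk; lra.
Qed.
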